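(* Let $p,q$ be positive integers with $p/q\ge4$, $k=\lfloor p/q\rfloor$, $r=p-kq\ge1$, and $t$ the smallest positive integer with $(t+1)q\equiv r\pmod p$. Let $G$ be a graph and $f,g$ two $k$-colourings of $G$ with colours $\{0,\dots,k-1\}$, and let $(G',\alpha,\beta)$ be constructed from $(G,f,g)$ as described in the context. If $\alpha$ reconfigures to $\beta$ (as $(p,q)$-colourings of $G'$), then $f$ reconfigures to $g$ (as $k$-colourings of $G$).
   Context: Intervals $[a,b]=\{a,a+1,\dots,b\}$ are taken modulo $p$. A $(p,q)$-colouring is a map to $\{0,\dots,p-1\}$ with $q\le|\psi(x)-\psi(y)|\le p-q$ on every edge; a $k$-colouring is a proper colouring with colours $\{0,\dots,k-1\}$; in either setting, $a$ reconfigures to $b$ if there is a sequence of such colourings from $a$ to $b$ with consecutive ones differing on at most one vertex. Let $\gamma(0)=0$ and $\gamma(i)=iq+r$ for $1\le i\le k-1$. Construction of $G'$: start from $G$; add a disjoint copy of the circular clique on vertices $y_0,\dots,y_{p-1}$ ($y_iy_j$ an edge iff $q\le|i-j|\le p-q$); for every edge $uv$ of $G$ add two new paths $P_{uv}=u\,x_0^{uv}\cdots x_t^{uv}\,v$ and $P_{vu}=v\,x_0^{vu}\cdots x_t^{vu}\,u$, internally disjoint from everything else and each other; join $x_0^{ab}$ and $x_t^{ab}$ to all $y_j$ with $j\in[3q-1,p-q-1]$, and join $x_i^{ab}$ ($1\le i\le t-1$) to all $y_j$ with $j\in[(i+3)q-1,(i-1)q]$. Colouring $\alpha$: $\alpha(w)=\gamma(f(w))$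 for $w\in V(G)$; $\alpha(y_i)=i$; for each path $P_{ab}$ (over both orderings of each edge of $G$): if $\alpha(a)=0$, set $\alpha(x_i^{ab})=(i+1)q\bmod p$ for $0\le i\le t$; if $\alpha(b)=0$, set $\alpha(x_i^{ab})=iq\bmod p$ for $0\le i\le t-1$ and $\alpha(x_t^{ab})=q$; if $\alpha(a)\ne0\ne\alpha(b)$, set $\alpha(x_i^{ab})=iq\bmod p$ for $0\le i\le t-1$ and $\alpha(x_t^{ab})=0$. The colouring $\beta$ is defined in the same way from $g$. *)

(* Defs.v *)
From mathcomp Require Import all_boot.
Set Implicit Arguments. Unset Strict Implicit. Unset Printing Implicit Defensive.

Definition ndist (a b : nat) : nat := maxn a b - minn a b.

(* j lies in the modular interval [a, b] = {a, a+1, ..., b} taken modulo p *)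
Definition in_mod_interval (p a b j : nat) : bool :=
  ((j + p - a %% p) %% p) <= ((b %% p + p - a %% p) %% p).

Definition k_colouring (T : Type) (k : nat) (E : rel T) (c : T -> nat) : Prop :=
  (forall x, c x < k) /\ (forall x y, E x y -> c x != c y).

Definition pq_colouring (T : Type) (p q : nat) (E : rel T) (c : T -> nat) : Prop :=
  (forall x, c x < p) /\
  (forall x y, E x y -> (q <= ndist (c x) (c y)) && (ndist (c x) (c y) <= p - q)).

Definition reconfigures (T : Type) (ok : (T -> nat) -> Prop) (a b : T -> nat) : Prop :=
  exists (n : nat) (c : nat -> T -> nat),
    (forall x, c 0 x = a x) /\ (forall x, c n x = b x) /\
    (forall i, i <= n -> ok (c i)) /\
    (forall i, i < n -> forall w w', c i w <> c i.+1 w -> c i w' <> c i.+1 w' -> w = w').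

(* internal path vertices x_i^{ab}, for ordered pairs (a,b) with ab an edge, 0 <= i <= t *)
Definition pathvert (V : finType) (e : rel V) (t : nat) :=
  {x : V * V * 'I_t.+1 | e x.1.1 x.1.2}.

(* vertex set of G' : V(G) + {y_0..y_{p-1}} + path vertices *)
Definition Gvert (V : finType) (e : rel V) (p t : nat) :=
  ((V + 'I_p) + pathvert e t)%type.

Definition Gadj0 (V : finType) (e : rel V) (p q t : nat)
  (u w : Gvert e p t) : bool :=
  match u, w with
  | inl (inl a), inl (inl b) => e a b
  | inl (inr i), inl (inr j) => (q <= ndist i j) && (ndist i j <= p - q)
  | inr x, inl (inl v) =>
      let: (a, b, i) := val x in
      ((nat_of_ord i == 0) && (v == a)) || ((nat_of_ord i == t) && (v == b))
  | inr x, inr x' =>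
      let: (a, b, i) := val x in
      let: (a', b', i') := val x' in
      [&& a == a', b == b' & nat_of_ord i' == (nat_of_ord i).+1]
  | inr x, inl (inr j) =>
      let: (a, b, i) := val x in
      if (nat_of_ord i == 0) || (nat_of_ord i == t) then
        in_mod_interval p (3 * q - 1) (p - q - 1) j
      else
        in_mod_interval p ((i + 3) * q - 1) ((i - 1) * q) j
  | _, _ => false
  end.

Definition Gadj (V : finType) (e : rel V) (p q t : nat) : rel (Gvert e p t) :=
  fun u w => Gadj0 q u w || Gadj0 q w u.

Definition gamma (q r i : nat) : nat := if i == 0 then 0 else i * q + r.

(* the colouring alpha (resp. beta) of G' built from a k-colouring col of G *)
Definition liftcol (V : finType) (e : rel V) (p q r t : nat) (col : V -> nat)
  (w : Gvert e p t) : nat :=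
  match w with
  | inl (inl v) => gamma q r (col v)
  | inl (inr i) => nat_of_ord i
  | inr x =>
      let: (a, b, i) := val x in
      if gamma q r (col a) == 0 then ((i + 1) * q) %% p
      else if gamma q r (col b) == 0 then
        (if nat_of_ord i == t then q else (i * q) %% p)
      else (if nat_of_ord i == t then 0 else (i * q) %% p)
  end.

(* Main.v *)
Require Import Defs.
From mathcomp Require Import all_boot zify.
Set Implicit Arguments. Unset Strict Implicit. Unset Printing Implicit Defensive.

Definition adjq (p q a b : nat) : bool := (q <= ndist a b) && (ndist a b <= p - q).

Lemma mod2 p x : x < p + p -> x %% p = if x < p then x else x - p.
Proof.
move=> h; case: ifP => hx; first by rewrite modn_small.
move/negbT: hx; rewrite -leqNgt => hx.
rewrite -{1}(subnK hx) modnDr modn_small //; lia.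
Qed.

Lemma adj_tr p q a b o : a < p -> b < p ->
  adjq p q ((a + o) %% p) ((b + o) %% p) = adjq p q a b.
Proof.
move=> ha hb.
have p0 : 0 < p by lia.
rewrite -(modnDmr a) -(modnDmr b).
have ho : o %% p < p by rewrite ltn_mod.
move: (o %% p) ho => o' ho.
rewrite !mod2; try lia.
rewrite /adjq /ndist.
case: ifP; case: ifP => h1 h2; apply/idP/idP => /andP [H1 H2]; apply/andP; split; lia.
Qed.

Lemma rot_inv p x o : x < p -> ((x + (p - o %% p)) %% p + o) %% p = x.
Proof.
move=> xp. have p0 : 0 < p by lia.
have op : o %% p <= p by apply: ltnW; rewrite ltn_mod.
rewrite modnDml {2}(divn_eq o p).
move: (o %/ p) (o %% p) op => A B op.
have -> : x + (p - B) + (A * p + B) = (A * p + x) + p by lia.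
by rewrite modnDr modnMDl modn_small.
Qed.

Lemma KEY p a d : d < p -> ((a + d) %% p + p - a %% p) %% p = d.
Proof.
move=> dp. have p0: 0 < p by lia.
have ap : a %% p <= p by apply: ltnW; rewrite ltn_mod.
rewrite -addnBA // modnDml {1}(divn_eq a p).
move: (a %/ p) (a %% p) ap => A B ap.
have -> : A * p + B + d + (p - B) = A * p + d + p by lia.
by rewrite modnDr modnMDl modn_small.
Qed.

Lemma IMI p a b d e j : d <= e -> e < p -> b %% p = (a + e) %% p ->
  j = (a + d) %% p -> in_mod_interval p a b j.
Proof.
move=> de ep hb hj.
by rewrite /in_mod_interval hb hj !KEY //; lia.
Qed.

Lemma tm p q r t : 0 < q -> 4 * q <= p -> r < q -> 0 < t ->
  (t.+1 * q) %% p = r %% p -> ((t - 1) * q) %% p = p + r - 2 * q.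
Proof.
move=> q0 pq rq t0 ht.
have p0 : 0 < p by lia.
have : ((t-1) * q + 2 * q) %% p = r.
  rewrite (modn_small (_ : r < p)) in ht; last lia.
  rewrite -mulnDl -ht.
  by congr (_ %% _); congr (_ * _); lia.
rewrite -modnDml.
have : (t - 1) * q %% p < p by rewrite ltn_mod.
move: ((t - 1) * q %% p) => m mp.
rewrite mod2; last lia.
case: ifP => hh; lia.
Qed.

Section Main.
Variables (p q r t : nat) (V : finType) (e : rel V).
Hypotheses (q0 : 0 < q) (pq4 : 4 * q <= p) (r1 : 1 <= r) (rq : r < q) (t0 : 0 < t).

Definition xv (a b : V) (H : e a b) (i : nat) : Gvert e p t :=
  inr (exist (fun x : V * V * 'I_t.+1 => e x.1.1 x.1.2) (a, b, inord i) H).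
Definition vG (v : V) : Gvert e p t := inl (inl v).
Definition vY (j : 'I_p) : Gvert e p t := inl (inr j).

Variable phi : Gvert e p t -> nat.
Hypothesis phiok : pq_colouring p q (@Gadj V e p q t) phi.
Hypothesis yfix : forall j : 'I_p, phi (vY j) = j.

Lemma p0 : 0 < p. Proof. lia. Qed.

Lemma padj u w : Gadj q u w -> adjq p q (phi u) (phi w).
Proof. exact: phiok.2. Qed.

Lemma Y0 a b (H : e a b) i : (i == 0) || (i == t) ->
  phi (xv H i) < 2 * q \/ phi (xv H i) = p - 1.
Proof.
move=> hi.
have cp : phi (xv H i) < p := phiok.1 _.
have it : i < t.+1 by case/orP: hi => /eqP ->; lia.
move: (phi (xv H i)) (padj (u := xv H i)) cp => c hc cp.
case: (ltnP c (2 * q)) => c2; first by left.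
case: (ltnP c (p - 1)) => c3; last by right; lia.
exfalso.
pose j2 := if c <= 3*q-1 then 3*q-1 else if c <= p - q - 1 then c else p - q - 1.
have j2a : 3*q-1 <= j2 <= p - q - 1 by rewrite /j2; case: ifP => h1; [|case: ifP => h2]; lia.
have j2b : ~~ adjq p q c j2 by rewrite /j2 /adjq /ndist; case: ifP => h1; [|case: ifP => h2]; lia.
have jp : j2 < p by lia.
suff g : Gadj q (xv H i) (vY (Ordinal jp)).
  by have := hc _ g; rewrite yfix /= (negbTE j2b).
apply/orP; left.
rewrite /= inordK // hi.
apply: (IMI (d := j2 - (3 * q - 1)) (e := p - 4 * q)); try lia.
  by rewrite (_ : 3 * q - 1 + (p - 4 * q) = p - q - 1) //; lia.
by rewrite (_ : 3 * q - 1 + (j2 - (3 * q - 1)) = j2) ?modn_small //; lia.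
Qed.

Lemma Y1 a b (H : e a b) i : 0 < i < t ->
  exists2 s, s < 2 * q & phi (xv H i) = (s + i * q) %% p.
Proof.
case/andP=> i0 it.
have cp : phi (xv H i) < p := phiok.1 _.
have hc : phi (xv H i) = ((phi (xv H i) + (p - (i * q) %% p)) %% p + i * q) %% p
  by rewrite rot_inv.
have sp : (phi (xv H i) + (p - (i * q) %% p)) %% p < p by rewrite ltn_mod p0.
move: ((phi (xv H i) + (p - (i * q) %% p)) %% p) hc sp => s hc sp.
exists s => //.
rewrite ltnNge; apply/negP => s2.
pose j2 := if s <= 3*q-1 then 3*q-1 else if s <= p - q then s else p - q.
have j2a : 3*q-1 <= j2 <= p - q by rewrite /j2; case: ifP => h1; [|case: ifP => h2]; lia.
have j2b : ~~ adjq p q s j2 by rewrite /j2 /adjq /ndist; case: ifP => h1; [|case: ifP => h2]; lia.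
have jp : (j2 + i * q) %% p < p by rewrite ltn_mod p0.
suff g : Gadj q (xv H i) (vY (Ordinal jp)).
  have := padj g; rewrite yfix /= hc adj_tr //; last lia.
  by move=> hh; rewrite hh in j2b.
apply/orP; left.
rewrite /= inordK; last lia.
rewrite (_ : (i == 0) || (i == t) = false); last lia.
clearbody j2; clear hc jp.
have iq : q <= i * q by rewrite leq_pmull.
apply: (IMI (d := j2 - (3 * q - 1)) (e := p + 1 - 4 * q)); [lia|lia| |].
  rewrite -(modnDr ((i - 1) * q) p); congr (_ %% _); rewrite mulnBl mulnDl mul1n; lia.
by congr (_ %% _); rewrite mulnDl; lia.
Qed.

Lemma chain u v (H : e u v) : phi (vG u) < r -> forall i, i < t ->
  exists s, [/\ phi (vG u) + q <= s, s < 2 * q & phi (xv H i) = (s + i * q) %% p].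
Proof.
move=> cur; elim=> [_|i IH hi].
  have g : Gadj q (vG u) (xv H 0).
    by apply/orP; right; rewrite /= inordK //= eqxx.
  have := padj g; rewrite /adjq /ndist => ad.
  have cp : phi (xv H 0) < p := phiok.1 _.
  case: (Y0 H (i:=0) _) => // h0; last by rewrite h0 in ad; lia.
  exists (phi (xv H 0)); rewrite mul0n addn0 modn_small //; split => //; lia.
have [s [s1 s2 hs]] := IH (ltnW hi).
have hi1 : 0 < i.+1 < t by lia.
have [s' s'2 hs'] := Y1 H hi1.
have g : Gadj q (xv H i) (xv H i.+1).
  by apply/orP; left; rewrite /= !inordK ?eqxx //; lia.
have ad := padj g; rewrite hs hs' mulSn addnA adj_tr /adjq /ndist in ad; [|lia|lia].
exists s'; split => //; lia.
Qed.

Lemma endp (ht : (t.+1 * q) %% p = r %% p) u v (H : e u v) : phi (vG u) + q <= phi (vG v) -> phi (vG v) < q + r -> False.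
Proof.
move=> uv vr.
have htm := tm q0 pq4 rq t0 ht; clear ht.
have cur : phi (vG u) < r by lia.
have ht1 : t - 1 < t by lia.
have [s [s1 s2 hs]] := chain H cur ht1.
have g : Gadj q (xv H (t-1)) (xv H t).
  by apply/orP; left; rewrite /= !inordK ?eqxx //; lia.
have g2 : Gadj q (xv H t) (vG v).
  by apply/orP; left; rewrite /= !inordK ?eqxx ?orbT //; lia.
have cp : phi (xv H t) < p := phiok.1 _.
have ad2 := padj g2.
have ad := padj g; rewrite hs -modnDmr htm in ad.
have h0 := Y0 H (i:=t) (_ : (t == 0) || (t == t)); rewrite eqxx orbT in h0.
have {}h0 := h0 isT.
move: ad ad2 h0 cp uv vr s1 s2 cur.
move: (phi (xv H t)) (phi (vG u)) (phi (vG v)) => X cu cv.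
clear hs g g2 htm ht1.
move=> ad ad2 h0 cp uv vr s1 s2 cur.
case: h0 => h0.
  rewrite (_ : X = ((X + 2 * q - r) + (p + r - 2 * q)) %% p) in ad; last first.
    rewrite (_ : X + 2 * q - r + (p + r - 2 * q) = X + p); last lia.
    by rewrite modnDr modn_small.
  rewrite adj_tr in ad; [|lia|lia].
  move: ad ad2; rewrite /adjq /ndist; clear -h0 cp uv vr s1 s2 cur q0 pq4 rq; lia.
rewrite h0 (_ : p - 1 = ((2 * q - r - 1) + (p + r - 2 * q)) %% p) in ad; last first.
  rewrite modn_small; lia.
rewrite adj_tr in ad; [|lia|lia].
move: ad; rewrite /adjq /ndist; clear -s1 s2 cur q0 pq4 rq; lia.
Qed.

Definition hcol (q r c : nat) := if c < q + r then 0 else (c - r) %/ q.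

Lemma hprop (ht : (t.+1 * q) %% p = r %% p) (esym : symmetric e) u v :
  e u v -> hcol q r (phi (vG u)) != hcol q r (phi (vG v)).
Proof.
move=> H.
have H' : e v u by rewrite esym.
have g : Gadj q (vG u) (vG v) by apply/orP; left.
have ad := padj g.
have E1 := endp ht H; have E2 := endp ht H'.
move: ad E1 E2; rewrite /hcol.
move: (phi (vG u)) (phi (vG v)) => cu cv ad E1 E2.
case: (ltnP cu (q + r)) => hu; case: (ltnP cv (q + r)) => hv.
- exfalso; move: ad; rewrite /adjq /ndist => ad.
  case: (leqP cu cv) => c; [apply: E1 | apply: E2]; lia.
- by rewrite eq_sym -lt0n divn_gt0 //; lia.
- by rewrite -lt0n divn_gt0 //; lia.
- apply/negP => /eqP E.
  have a1 := leq_trunc_div (cu - r) q; have a2 := ltn_ceil (cu - r) q0.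
  have a3 := leq_trunc_div (cv - r) q; have a4 := ltn_ceil (cv - r) q0.
  rewrite E mulSn in a1 a2. rewrite mulSn in a4.
  move: ad a1 a2 a3 a4 hu hv; rewrite /adjq /ndist.
  move: ((cv - r) %/ q * q) => M; clear; lia.
Qed.

End Main.

Lemma frozen p q t (V : finType) (e : rel V) (c1 c2 : Gvert e p t -> nat) :
  0 < q -> 4 * q <= p ->
  pq_colouring p q (@Gadj V e p q t) c2 ->
  (forall j : 'I_p, c1 (inl (inr j)) = j) ->
  (forall w w', c1 w <> c2 w -> c1 w' <> c2 w' -> w = w') ->
  forall j : 'I_p, c2 (inl (inr j)) = j.
Proof.
move=> q0 pq4 ok2 f1 one j.
have p0 : 0 < p by lia.
case: (eqVneq (c2 (inl (inr j))) j) => // hne; exfalso.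
have oth : forall j' : 'I_p, j' != j -> c2 (inl (inr j')) = j'.
  move=> j' hj; case: (eqVneq (c2 (inl (inr j'))) j') => // hn; exfalso.
  have E := one (inl (inr j)) (inl (inr j')).
  rewrite !f1 in E.
  have {}E := E (fun h => negP hne (introT eqP (esym h))) (fun h => negP hn (introT eqP (esym h))).
  by case: E => E; rewrite E eqxx in hj.
have Cp : c2 (inl (inr j)) < p := ok2.1 _.
have hC := rot_inv j Cp.
have C'p : (c2 (inl (inr j)) + (p - j %% p)) %% p < p by rewrite ltn_pmod.
move: ((c2 (inl (inr j)) + (p - j %% p)) %% p) hC C'p => C' hC C'p.
have C'0 : 0 < C'.
  rewrite lt0n; apply/negP => /eqP h0.
  by rewrite -hC h0 add0n modn_small // eqxx in hne.
pose j2 := if C' <= q then q else if C' <= p - q then C' else p - q.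
have j2a : q <= j2 <= p - q by rewrite /j2; case: ifP => h1; [|case: ifP => h2]; lia.
have j2b : ~~ adjq p q C' j2 by rewrite /j2 /adjq /ndist; case: ifP => h1; [|case: ifP => h2]; lia.
clearbody j2.
pose jj := Ordinal (ltn_pmod (j2 + j) p0).
have jp : (j : nat) = (0 + j) %% p by rewrite add0n modn_small.
have aj : adjq p q j jj.
  change (adjq p q j ((j2 + j) %% p)); rewrite {1}jp adj_tr //; last lia.
  rewrite /adjq /ndist; lia.
have g : Gadj q (inl (inr j) : Gvert e p t) (inl (inr jj)) by apply/orP; left.
have jjn : jj != j.
  apply/negP => /eqP hh; rewrite hh /adjq /ndist maxnn minnn subnn in aj; lia.
have := ok2.2 _ _ g.
rewrite (oth jj jjn) -hC.
change (adjq p q ((C' + j) %% p) ((j2 + j) %% p) -> False); rewrite adj_tr //; last lia.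
by rewrite (negbTE j2b).
Qed.

Lemma hgam q r i : 0 < q -> hcol q r (gamma q r i) = i.
Proof.
move=> q0; rewrite /hcol /gamma; case: i => [|i] /=; first by rewrite addn_gt0 q0.
have : q <= i.+1 * q by rewrite leq_pmull.
case: ifP => h; first lia.
by rewrite addnK mulnK.
Qed.

Lemma hbound q r k c : 0 < q -> 0 < k -> c < k * q + r -> hcol q r c < k.
Proof.
move=> q0 k0 ck; rewrite /hcol; case: ifP => // h.
rewrite ltn_divLR //; lia.
Qed.

Theorem proposition3p3 (p q k r t : nat) (V : finType) (e : rel V) (f g : V -> nat) :
  0 < q -> 4 * q <= p ->
  k = p %/ q -> r = p - k * q -> 1 <= r ->
  0 < t -> (t.+1 * q) %% p = r %% p ->
  (forall s, 0 < s -> s < t -> (s.+1 * q) %% p != r %% p) ->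
  symmetric e -> irreflexive e ->
  k_colouring k e f -> k_colouring k e g ->
  reconfigures (pq_colouring p q (@Gadj V e p q t))
    (@liftcol V e p q r t f) (@liftcol V e p q r t g) ->
  reconfigures (k_colouring k e) f g.
Proof.
move=> q0 pq4 hk hr r1 t0 ht hmin esym eirr fok gok [n [c [c0 [cn [cok cstep]]]]].
have dq := divn_eq p q; have mq := ltn_pmod p q0; rewrite -hk in dq.
have hp : p = k * q + r by move: dq mq hr; move: (k * q) (p %% q) => A B; lia.
have rq : r < q by move: dq mq hr; move: (k * q) (p %% q) => A B; lia.
have k0 : 0 < k.
  rewrite lt0n; apply/negP => /eqP k0; rewrite k0 mul0n add0n in hp; lia.
have yfix : forall i, i <= n -> forall j, c i (inl (inr j)) = j.
  elim=> [_ j|i IH hi j]; first by rewrite c0.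
  exact: (frozen q0 pq4 (cok _ hi) (IH (ltnW hi)) (cstep i hi)).
exists n, (fun i v => hcol q r (c i (inl (inl v)))).
split; first by move=> x; rewrite c0 /= hgam.
split; first by move=> x; rewrite cn /= hgam.
split.
  move=> i hi; split.
    move=> x; apply: hbound => //; rewrite -hp; exact: (cok i hi).1.
  move=> x y exy.
  exact: (@hprop p q r t V e q0 pq4 r1 rq t0 (c i) (cok i hi) (yfix i hi) ht esym x y exy).
move=> i hi w w' h1 h2.
have E := cstep i hi (inl (inl w)) (inl (inl w')) (fun E => h1 (congr1 _ E)) (fun E => h2 (congr1 _ E)).
by case: E.
Qed.
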